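(* Let $H$ be a real Hilbert space, $C\subseteq H$ nonempty, closed and convex, and $F:H\to H$ an operator such that (A1) $S_D\neq\emptyset$; (A2) $F$ is quasimonotone; (A3) $F$ is uniformly continuous on $H$. Let $\{z_n\},\{w_n\},\{\lambda_n\}$ be the sequences generated by Algorithm 3.1 (with $\epsilon=0$), assume $z_n\neq w_n$ for all $n$, and assume $\lambda_n\to0$ as $n\to\infty$. Let $I:=\{n\in\mathbb{N}:\lambda_{n+1}<\lambda_n\}$ and let $\{n_k\}_{k\ge1}$ be an enumeration of all indices in $I$. Then (i) $\lim_{k\to\infty}\frac{\|z_{n_k}-w_{n_k}\|}{\lambda_{n_k}}=0$; (ii) $\lim_{k\to\infty}\frac{\|z_{n_k+1}-z_{n_k}\|}{\lambda_{n_k}}=0$.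
   Context: $P_C$ denotes the metric projection onto $C$. $S_D$ is the set of $z\in C$ with $\langle F(v),v-z\rangle\ge0$ for all $v\in C$. $F$ is quasimonotone if $\langle F(w),z-w\rangle>0$ implies $\langle F(z),z-w\rangle\ge0$ for all $w,z\in H$. Algorithm 3.1 (with $\epsilon=0$): fix $\mu\in(0,1)$, a sequence $\{\xi_n\}\subset[0,\infty)$ with $\sum_{n}\xi_n<\infty$, $z_1\in H$ and $\lambda_1>0$. For $n=1,2,\dots$: $w_n=P_C(z_n-\lambda_nF(z_n))$; $z_{n+1}=w_n+\lambda_n(F(z_n)-F(w_n))$; $\lambda_{n+1}=\min\{\frac{\mu\|z_n-w_n\|}{\|F(z_n)-F(w_n)\|},\lambda_n+\xi_n\}$ if $F(z_n)\neq F(w_n)$, and $\lambda_{n+1}=\lambda_n+\xi_n$ otherwise. *)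

(* Defs.v *)
From HB Require Import structures.
From mathcomp Require Import all_boot all_order all_algebra.
From mathcomp Require Import all_classical all_reals all_analysis.
Set Implicit Arguments. Unset Strict Implicit. Unset Printing Implicit Defensive.
Import Order.TTheory GRing.Theory Num.Theory.
Import numFieldNormedType.Exports.
Local Open Scope classical_set_scope.
Local Open Scope ring_scope.

(* [ip] is a real inner product on V inducing the norm of V.
   Together with completeness of V this makes V a real Hilbert space. *)
Definition is_inner_product {R : realType} {V : normedModType R}
  (ip : V -> V -> R) : Prop :=
  (forall x y, ip x y = ip y x) /\
  (forall (a : R) x y z, ip (a *: x + y) z = a * ip x z + ip y z) /\
  (forall x, ip x x = `|x| ^+ 2).

Definition convex_subset {R : realType} {V : normedModType R} (C : set V) : Prop :=
  forall x y (t : R), C x -> C y -> 0 <= t <= 1 -> C (t *: x + (1 - t) *: y).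

Definition is_metric_proj {R : realType} {V : normedModType R}
  (C : set V) (x p : V) : Prop :=
  C p /\ forall y, C y -> `|x - p| <= `|x - y|.

Definition dual_solutions {R : realType} {V : normedModType R}
  (ip : V -> V -> R) (C : set V) (F : V -> V) : set V :=
  [set z | C z /\ forall v, C v -> 0 <= ip (F v) (v - z)].

Definition quasimonotone {R : realType} {V : normedModType R}
  (ip : V -> V -> R) (F : V -> V) : Prop :=
  forall w z, 0 < ip (F w) (z - w) -> 0 <= ip (F z) (z - w).

Definition unif_cont_on_H {R : realType} {V : normedModType R} (F : V -> V) : Prop :=
  forall e : R, 0 < e -> exists2 d : R, 0 < d &
    forall x y, `|x - y| < d -> `|F x - F y| < e.

(* The sequences (z, w, lam) are generated by Algorithm 3.1 with epsilon = 0.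
   Indices are shifted: z 0, w 0, lam 0 stand for z_1, w_1, lambda_1. *)
Definition algorithm31 {R : realType} {V : normedModType R}
  (C : set V) (F : V -> V) (mu : R) (xi : nat -> R)
  (z w : nat -> V) (lam : nat -> R) : Prop :=
  0 < lam 0 /\
  forall n,
    is_metric_proj C (z n - lam n *: F (z n)) (w n) /\
    z n.+1 = w n + lam n *: (F (z n) - F (w n)) /\
    lam n.+1 = (if F (z n) != F (w n)
                then Num.min (mu * `|z n - w n| / `|F (z n) - F (w n)|) (lam n + xi n)
                else lam n + xi n).

(* Main.v *)
Require Import Defs.
From HB Require Import structures.
From mathcomp Require Import all_boot all_order all_algebra.
From mathcomp Require Import all_classical all_reals all_analysis.
From mathcomp Require Import lra.
Import Order.TTheory GRing.Theory Num.Theory.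
Import numFieldNormedType.Exports.
Local Open Scope classical_set_scope.
Local Open Scope ring_scope.
Lemma chain_bound (R : realType) (V : normedModType R) (F : V -> V) (d : R) :
  0 < d -> (forall x y, `|x - y| < d -> `|F x - F y| < 1) ->
  forall n : nat, forall x y, `|x - y| <= n%:R * (d / 2) -> `|F x - F y| <= n%:R.
Proof.
move=> d0 Hd; elim=> [|n IH] x y Hxy.
  have : `|x - y| <= 0 by rewrite mul0r in Hxy.
  rewrite normr_le0 subr_eq0 => /eqP ->; by rewrite subrr normr0.
have [le|lt] := leP `|x - y| (d / 2).
  apply/ltW/(lt_le_trans (Hd _ _ _)); first by apply: (le_lt_trans le); rewrite ltr_pdivrMr // ltr_pMr // ltr1n.
  by rewrite ler1n.
have np : 0 < `|x - y| by apply: lt_trans lt; rewrite divr_gt0.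
pose s := (d / 2) / `|x - y|.
pose m := x + s *: (y - x).
have s0 : 0 <= s by rewrite divr_ge0 // ltW // divr_gt0.
have s1 : s <= 1 by rewrite ler_pdivrMr // mul1r ltW.
have e1 : `|x - m| = d / 2.
  rewrite /m opprD addrA subrr sub0r normrN normrZ ger0_norm // distrC.
  by rewrite /s divfK // gt_eqF.
have e2 : `|m - y| = `|x - y| - d / 2.
  have -> : m - y = (1 - s) *: (x - y).
    rewrite /m scalerBl scale1r !scalerBr. rewrite opprB !addrA; by rewrite (addrAC _ _ (- y)) (addrAC x).
  rewrite normrZ ger0_norm ?subr_ge0 // mulrBl mul1r; congr (_ - _).
  by rewrite /s divfK // gt_eqF.
have A : `|F x - F m| <= 1.
  by apply/ltW/Hd; rewrite e1 ltr_pdivrMr // ltr_pMr // ltr1n.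
have B : `|F m - F y| <= n%:R.
  by apply: IH; rewrite e2 lerBlDr; apply: (le_trans Hxy); rewrite -natr1 mulrDl mul1r.
have -> : F x - F y = (F x - F m) + (F m - F y) by rewrite addrA subrK.
apply: le_trans (ler_normD _ _) _; rewrite -natr1 addrC; exact: lerD.
Qed.
Lemma ev (R : realType) (u : nat -> R) : (forall e, 0 < e -> exists N, forall n, (N <= n)%N -> `|u n| < e) -> u @ \oo --> 0.
Proof. move=> H; apply/cvgr0Pnorm_lt => e e0. have [N HN] := H e e0. by exists N => // n /= hn; apply: HN. Qed.
Lemma ve (R : realType) (u : nat -> R) : u @ \oo --> 0 -> (forall e, 0 < e -> exists N, forall n, (N <= n)%N -> `|u n| < e).
Proof. move=> /cvgr0Pnorm_lt H e e0. have [N _ HN] := H e e0. exists N => n hn. exact: HN. Qed.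

Lemma affine_bound (R : realType) (V : normedModType R) (F : V -> V) (d : R) :
  0 < d -> (forall x y, `|x - y| < d -> `|F x - F y| < 1) ->
  forall x y, `|F x - F y| <= (2 / d) * `|x - y| + 1.
Proof.
move=> d0 Hd x y.
pose r := `|x - y| / (d / 2).
have d2 : 0 < d / 2 by rewrite divr_gt0.
have r0 : 0 <= r by rewrite divr_ge0 // ltW.
pose n := (Num.truncn r).+1.
have H1 : `|x - y| <= n%:R * (d / 2).
  rewrite -ler_pdivrMr //; apply/ltW; exact: truncnS_gt.
apply: (le_trans (@chain_bound _ _ F d d0 Hd n x y H1)).
rewrite /n -natr1 lerD2r.
have -> : 2 / d * `|x - y| = r by rewrite /r invf_div mulrC.
by rewrite truncn_le.
Qed.

Theorem lemma4p3 (R : realType) (V : completeNormedModType R)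
  (ip : V -> V -> R) (C : set V) (F : V -> V)
  (mu : R) (xi : nat -> R) (z w : nat -> V) (lam : nat -> R) (nk : nat -> nat) :
  is_inner_product ip ->
  C !=set0 -> closed C -> convex_subset C ->
  dual_solutions ip C F !=set0 ->
  quasimonotone ip F ->
  unif_cont_on_H F ->
  0 < mu < 1 ->
  (forall n, 0 <= xi n) -> cvg (series xi @ \oo) ->
  algorithm31 C F mu xi z w lam ->
  (forall n, z n != w n) ->
  lam @ \oo --> 0 ->
  (forall k, (nk k < nk k.+1)%N) ->
  (forall n, (exists k, nk k = n) <-> lam n.+1 < lam n) ->
  ((fun k => `|z (nk k) - w (nk k)| / lam (nk k)) @ \oo --> 0) /\
  ((fun k => `|z (nk k).+1 - z (nk k)| / lam (nk k)) @ \oo --> 0).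
Proof.
move=> _ _ _ _ _ _ Huc /andP[mu0 mu1] xi0 _ [lam0 Halg] zw lamc nkinc nkI.
have lampos : forall n, 0 < lam n.
  elim=> // n IH; have [_ [_ ->]] := Halg n.
  have lx : 0 < lam n + xi n by apply: (lt_le_trans IH); rewrite lerDl.
  case: ifPn => hF //; rewrite lt_min lx andbT.
  by rewrite divr_gt0 ?mulr_gt0 ?normr_gt0 ?subr_eq0.
have key : forall n, lam n.+1 < lam n ->
    mu * `|z n - w n| = lam n.+1 * `|F (z n) - F (w n)|.
  move=> n; have [_ [_ E]] := Halg n.
  have lx : lam n <= lam n + xi n by rewrite lerDl.
  move: E; case: ifPn => hF ->; last by move=> h; have := lt_le_trans h lx; rewrite ltxx.
  have [h|h] := leP (mu * `|z n - w n| / `|F (z n) - F (w n)|) (lam n + xi n).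
    by move=> _; rewrite divfK // normr_eq0 subr_eq0.
  by move=> h'; have := lt_le_trans h' lx; rewrite ltxx.
have nkI' : forall k, lam (nk k).+1 < lam (nk k).
  by move=> k; apply/(nkI _).1; exists k.
have nkge : forall k, (k <= nk k)%N.
  elim=> // k IH; exact: leq_ltn_trans IH (nkinc k).
have lsm := @ve _ lam lamc.
have [D D0 HD] := Huc 1 ltr01.
pose A := 2 / D.
have A0 : 0 < A by rewrite divr_gt0.
have aff : forall x y, `|F x - F y| <= A * `|x - y| + 1 := @affine_bound _ _ F D D0 HD.
pose G k := `|F (z (nk k)) - F (w (nk k))|.
have HG : forall e, 0 < e -> exists K, forall k, (K <= k)%N -> G k < e.
  move=> e e0; have [d d0 Hd] := Huc e e0.
  have eps0 : 0 < Num.min (mu / (2 * A)) (d * mu / 2).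
    rewrite lt_min; apply/andP; split; first by rewrite divr_gt0 // mulr_gt0.
    by rewrite divr_gt0 // mulr_gt0.
  have [N HN] := lsm _ eps0.
  exists N => k hk.
  set n := nk k.
  have hn : (N <= n.+1)%N by apply: leq_trans hk _; apply: leq_trans (nkge k) _; exact: leqnSn.
  have := HN _ hn; rewrite ger0_norm ?ltW // lt_min => /andP[l1 l2].
  have Hk := key _ (nkI' k).
  have Ha := aff (z n) (w n).
  set a := `|z n - w n| in Hk Ha *.
  set b := `|F (z n) - F (w n)| in Hk Ha *.
  set l := lam n.+1 in l1 l2 Hk.
  have l0 : 0 < l by apply: lampos.
  have a0 : 0 <= a by apply: normr_ge0.
  clearbody A.
  have lA : l * A <= mu / 2.
    move: l1; rewrite ltr_pdivlMr ?mulr_gt0 // => h; lra.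
  have h : mu * a <= l * (A * a + 1).
    by rewrite Hk ler_pM2l.
  have ha : a <= 2 * l / mu.
    rewrite ler_pdivlMr //.
    have h2 : l * (A * a) <= mu / 2 * a by rewrite mulrA; exact: ler_wpM2r.
    nra.
  apply: Hd; apply: (le_lt_trans ha).
  move: l2; rewrite ltr_pdivlMr // => l2; rewrite ltr_pdivrMr //.
  lra.
have Hi : forall e, 0 < e -> exists K, forall k, (K <= k)%N ->
    `|z (nk k) - w (nk k)| / lam (nk k) < e /\ G k < e.
  move=> e e0.
  have em : 0 < Num.min (e * mu) e by rewrite lt_min; apply/andP; split; rewrite ?mulr_gt0.
  have [K HK] := HG _ em; exists K => k hk.
  have := HK k hk; rewrite /G lt_min => /andP[b1 b2]; split => //.
  have Hk := key _ (nkI' k).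
  have ln := nkI' k.
  set n := nk k in Hk ln b1 b2 *.
  set a := `|z n - w n| in Hk *.
  set b := `|F (z n) - F (w n)| in Hk b1 b2 *.
  have l0 : 0 < lam n.+1 by apply: lampos.
  have a0 : 0 <= a by apply: normr_ge0.
  have b0 : 0 <= b by apply: normr_ge0.
  rewrite ltr_pdivrMr //.
  have h1 : lam n.+1 * b <= lam n.+1 * (e * mu) by rewrite ler_pM2l // ltW.
  have h2 : lam n.+1 * (e * mu) < lam n * (e * mu) by rewrite ltr_pM2r ?mulr_gt0.
  nra.
split.
  apply: ev => e e0; have [K HK] := Hi e e0; exists K => k hk.
  rewrite ger0_norm; first by case: (HK k hk).
  by rewrite divr_ge0 ?normr_ge0 // ltW.
apply: ev => e e0.
have e2 : 0 < e / 2 by rewrite divr_gt0.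
have [K HK] := Hi _ e2; exists K => k hk.
have [h1 h2] := HK k hk.
set n := nk k in h1 h2 *.
have l0 : 0 < lam n by apply: lampos.
rewrite ger0_norm; last by rewrite divr_ge0 ?normr_ge0 // ltW.
have [_ [E _]] := Halg n.
rewrite E.
have -> : w n + lam n *: (F (z n) - F (w n)) - z n = (w n - z n) + lam n *: (F (z n) - F (w n)).
  by rewrite addrAC.
apply: (le_lt_trans (y := (`|z n - w n| + lam n * `|F (z n) - F (w n)|) / lam n)).
  rewrite ler_pM2r ?invr_gt0 //; apply: le_trans (ler_normD _ _) _.
  by rewrite distrC normrZ ger0_norm // ltW.
rewrite mulrDl mulrAC divff ?gt_eqF // mul1r.
rewrite /G /= -/n in h2.
lra.
Qed.
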